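(* Let $\varepsilon>0$, $\kappa\ge \frac14$, $\kappa_0=\frac18$, $\kappa^*=\kappa-\kappa_0$. For any two real periodic grid functions $v,w$ on the $N\times N$ grid with equal means ($h^2\sum_{i,j}v_{i,j}=h^2\sum_{i,j}w_{i,j}$), $$E_N(v)-E_N(w)\le \langle L_N v+f_N(w),\,v-w\rangle-\frac{\varepsilon^2}{2}\|\Delta_N(v-w)\|_2^2-\kappa^*\|\nabla_N(v-w)\|_2^2.$$
   Context: Setting: $\Omega=(0,1)^2$, $N=2K+1$, $h=1/N$, grid $x_i=ih$, $y_j=jh$; periodic grid functions have discrete Fourier expansions $f_{i,j}=\sum_{k,\ell=-K}^{K}\hat f_{k,\ell}\exp(2\pi\mathrm{i}(kx_i+\ell y_j))$. Spectral operators: $\mathcal D_{Nx}$, $\mathcal D_{Ny}$ multiply $\hat f_{k,\ell}$ by $2\pi\mathrm{i}k$, $2\pi\mathrm{i}\ell$; $\nabla_N f=(\mathcal D_{Nx}f,\mathcal D_{Ny}f)$, $\nabla_N\cdot(f_1,f_2)=\mathcal D_{Nx}f_1+\mathcal D_{Ny}f_2$, $\Delta_N=\mathcal D_{Nx}^2+\mathcal D_{Ny}^2$. Inner product $\langle f,g\rangle=h^2\sum_{i,j=0}^{N-1}f_{i,j}g_{i,j}$, $\|f\|_2=\langle f,f\rangle^{1/2}$. $L_N=\varepsilon^2\Delta_N^2-\kappa\Delta_N$. Pointwise nonlinearity $f_N(u)=\nabla_N\cdot\Big(\frac{\nabla_N u}{1+|\nabla_N u|^2}\Big)+\kappa\Delta_N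 u$, where the quotient is computed pointwise on the grid. Discrete energy: $E_N(\phi)=h^2\sum_{i,j=0}^{N-1}\big(-\frac12\ln(1+|\nabla_N\phi|^2)_{i,j}\big)+\frac{\varepsilon^2}{2}\|\Delta_N\phi\|_2^2$. *)

(* Defs.v *)
From HB Require Import structures.
From mathcomp Require Import all_boot all_order all_algebra.
From mathcomp Require Import all_classical all_reals.
From mathcomp Require Import exp trigo.
From mathcomp Require Import complex.
Set Implicit Arguments. Unset Strict Implicit. Unset Printing Implicit Defensive.
Import Order.TTheory GRing.Theory Num.Theory.
Local Open Scope ring_scope.
Local Open Scope complex_scope.

Section Grid.
Variable R : realType.
Variable K : nat.

(* N = 2K+1 ; grid indices i,j in {0,...,N-1}; frequencies k,l in {-K,...,K}
   are represented by k' : 'I_N via k = k' - K. *)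
Definition NN : nat := (K.*2).+1.
Definition hh : R := (NN%:R)^-1.

Definition gridfun := 'I_NN -> 'I_NN -> R.

Definition xc (i : 'I_NN) : R := i%:R * hh.
Definition freq (k : 'I_NN) : R := k%:R - K%:R.

Definition cexp2pi (t : R) : R[i] := (cos (2 * pi * t)) +i* (sin (2 * pi * t)).

(* discrete Fourier coefficients: f_{ij} = sum_{k,l} fhat_{kl} e(k x_i + l y_j) *)
Definition fhat (f : gridfun) (k l : 'I_NN) : R[i] :=
  ((hh ^+ 2)%:C) * \sum_(i < NN) \sum_(j < NN)
     ((f i j)%:C * cexp2pi (- (freq k * xc i + freq l * xc j))).

(* spectral derivatives; for real f the spectral sum is real, so we take its
   real part to stay in real grid functions *)
Definition DNx (f : gridfun) : gridfun := fun i j =>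
  complex.Re (\sum_(k < NN) \sum_(l < NN)
        ((0 +i* (2 * pi * freq k)) * fhat f k l * cexp2pi (freq k * xc i + freq l * xc j))).
Definition DNy (f : gridfun) : gridfun := fun i j =>
  complex.Re (\sum_(k < NN) \sum_(l < NN)
        ((0 +i* (2 * pi * freq l)) * fhat f k l * cexp2pi (freq k * xc i + freq l * xc j))).

Definition LapN (f : gridfun) : gridfun := fun i j => DNx (DNx f) i j + DNy (DNy f) i j.

Definition ip (f g : gridfun) : R := hh ^+ 2 * \sum_(i < NN) \sum_(j < NN) f i j * g i j.
Definition nrm2sq (f : gridfun) : R := ip f f.
Definition gradnrm2sq (f : gridfun) : R := nrm2sq (DNx f) + nrm2sq (DNy f).

Definition gsub (f g : gridfun) : gridfun := fun i j => f i j - g i j.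
Definition gadd (f g : gridfun) : gridfun := fun i j => f i j + g i j.

Definition LN (eps kappa : R) (f : gridfun) : gridfun := fun i j =>
  eps ^+ 2 * LapN (LapN f) i j - kappa * LapN f i j.

Definition gradsq (u : gridfun) : gridfun := fun i j => DNx u i j ^+ 2 + DNy u i j ^+ 2.

Definition fN (kappa : R) (u : gridfun) : gridfun := fun i j =>
  DNx (fun a b => DNx u a b / (1 + gradsq u a b)) i j
  + DNy (fun a b => DNy u a b / (1 + gradsq u a b)) i j
  + kappa * LapN u i j.

Definition EN (eps : R) (phi : gridfun) : R :=
  hh ^+ 2 * (\sum_(i < NN) \sum_(j < NN) (- (1/2) * ln (1 + gradsq phi i j)))
  + eps ^+ 2 / 2 * nrm2sq (LapN phi).

Definition gmean (f : gridfun) : R := hh ^+ 2 * \sum_(i < NN) \sum_(j < NN) f i j.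

End Grid.

(* Main.v *)
Require Import Defs.
From HB Require Import structures.
From mathcomp Require Import all_boot all_order all_algebra.
From mathcomp Require Import all_classical all_reals.
From mathcomp Require Import exp trigo.
From mathcomp Require Import complex.
From mathcomp Require Import topology normedtype derive realfun.
From mathcomp Require Import ring lra.
Import Order.TTheory GRing.Theory Num.Theory.
Import numFieldNormedType.Exports.
Local Open Scope ring_scope.

Section S.
Local Open Scope classical_set_scope.
Variable R : realType.

Lemma keyP (a b c d : R) :
  - (1/2) * ln (1 + (a ^+ 2 + b ^+ 2)) - - (1/2) * ln (1 + (c ^+ 2 + d ^+ 2))
  <= - ((c * (a - c) + d * (b - d)) / (1 + (c ^+ 2 + d ^+ 2)))
     + 1/8 * ((a - c) ^+ 2 + (b - d) ^+ 2).
Proof.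
set e1 := a - c; set e2 := b - d.
set s := 1 + (c ^+ 2 + d ^+ 2).
set B := c * e1 + d * e2; set C := e1 ^+ 2 + e2 ^+ 2.
pose pP : {poly R} := 1 + ((c%:P + 'X * e1%:P) ^+ 2 + (d%:P + 'X * e2%:P) ^+ 2).
pose pQ : {poly R} := 'X * (- (2 * B / s))%:P + 'X ^+ 2 * (C / 4)%:P.
have pPE t : pP.[t] = 1 + ((c + t * e1) ^+ 2 + (d + t * e2) ^+ 2).
  by rewrite /pP !hornerE.
have pQE t : pQ.[t] = t * - (2 * B / s) + t ^+ 2 * (C / 4).
  by rewrite /pQ !hornerE.
have pP'E t : (deriv pP).[t] = 2 * e1 * (c + t * e1) + 2 * e2 * (d + t * e2).
  by rewrite /pP !poly.derivE !hornerE /=; ring.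
have s_gt0 : 0 < s by rewrite /s ltr_pwDl // addr_ge0 // sqr_ge0.
have pQ'E t : (deriv pQ).[t] = - (2 * B / s) + C / 2 * t.
  rewrite /pQ !poly.derivE !hornerE /=; field; exact: lt0r_neq0.
have Ppos t : 0 < pP.[t] by rewrite pPE ltr_pwDl // addr_ge0 // sqr_ge0.
pose f := (@ln R \o horner pP) + horner pQ.
pose df := fun y => (pP.[y])^-1 * (deriv pP).[y] + (deriv pQ).[y].
have dphi (x : R) : is_derive x (1:R) f (df x).
  exact: is_deriveD (is_derive1_comp (is_derive1_ln (Ppos x)) (is_derive_poly pP x)) (is_derive_poly pQ x).
have fc : {within `[(0:R), 1], continuous f}.
  by apply: derivable_within_continuous => x _; case: (dphi x).
have [c0 c0in] := MVT (ltr01 : (0:R) < 1) (fun x _ => dphi x) fc.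
rewrite subr0 mulr1 => feq.
have hCS : B ^+ 2 <= (s - 1) * C.
  rewrite -subr_ge0; have -> : (s - 1) * C - B ^+ 2 = (c * e2 - d * e1) ^+ 2 by rewrite /s /B /C; ring.
  by rewrite sqr_ge0.
have c0pos : 0 < c0 by move: c0in; rewrite in_itv /= => /andP[].
have C_ge0 : 0 <= C by rewrite /C addr_ge0 // sqr_ge0.
have Pc0 : pP.[c0] = s + 2 * B * c0 + C * c0 ^+ 2 by rewrite pPE /s /B /C; ring.
have dfpos : 0 <= df c0.
  rewrite /df pP'E pQ'E.
  set Pt := pP.[c0].
  have Ptpos : 0 < Pt := Ppos c0.
  have br : 0 <= C * ((s - 2 + B * c0) ^+ 2 / 2 + 2 + (C * s - B ^+ 2) * c0 ^+ 2 / 2) + 4 * ((s - 1) * C - B ^+ 2).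
    have h4 : 0 <= 4 * ((s - 1) * C - B ^+ 2) by rewrite mulr_ge0 // subr_ge0.
    apply: addr_ge0 h4.
    apply: mulr_ge0 => //.
    have hB : 0 <= C * s - B ^+ 2.
      have : (s - 1) * C = C * s - C by ring.
      lra.
    have : 0 <= (C * s - B ^+ 2) * c0 ^+ 2 / 2.
      apply: mulr_ge0; last by rewrite invr_ge0.
      by apply: mulr_ge0 => //; exact: sqr_ge0.
    have := sqr_ge0 (s - 2 + B * c0). lra.
  have key : (2 * e1 * (c + c0 * e1) + 2 * e2 * (d + c0 * e2)) * s - 2 * B * Pt + C / 2 * c0 * Pt * s
      = c0 * (C * ((s - 2 + B * c0) ^+ 2 / 2 + 2 + (C * s - B ^+ 2) * c0 ^+ 2 / 2) + 4 * ((s - 1) * C - B ^+ 2)).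
    by rewrite /Pt Pc0 /B /C /s; field.
  have : 0 <= ((2 * e1 * (c + c0 * e1) + 2 * e2 * (d + c0 * e2)) * s - 2 * B * Pt + C / 2 * c0 * Pt * s) / (Pt * s).
    by rewrite key; apply: divr_ge0; [apply: mulr_ge0 => //; apply: ltW|apply: mulr_ge0; apply: ltW].
  suff -> : ((2 * e1 * (c + c0 * e1) + 2 * e2 * (d + c0 * e2)) * s - 2 * B * Pt + C / 2 * c0 * Pt * s) / (Pt * s) = Pt^-1 * (2 * e1 * (c + c0 * e1) + 2 * e2 * (d + c0 * e2)) + (- (2 * B / s) + C / 2 * c0) by [].
  by field; apply/andP; split; apply: lt0r_neq0.
have f1 : f 1 = ln (1 + (a ^+ 2 + b ^+ 2)) - 2 * (B / s) + C / 4.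
  have -> : f 1 = ln pP.[1] + pQ.[1] by [].
  have -> : pP.[1] = 1 + (a ^+ 2 + b ^+ 2).
    rewrite pPE /e1 /e2 !mul1r.
    have -> : c + (a - c) = a by ring.
    by have -> : d + (b - d) = b by ring.
  rewrite pQE; ring.
have f0 : f 0 = ln s.
  have -> : f 0 = ln pP.[0] + pQ.[0] by [].
  rewrite pPE pQE /s.
  by rewrite !mul0r !addr0 expr0n /= mul0r add0r addr0.
move: feq; rewrite f1 f0 => feq.
have : 0 <= ln (1 + (a ^+ 2 + b ^+ 2)) - 2 * (B / s) + C / 4 - ln s by rewrite feq.
lra.
Qed.
End S.

Section F.
Local Open Scope complex_scope.
Variable R : realType.
Variable K : nat.
Local Notation NN := (NN K).
Local Notation gf := (gridfun R K).

Definition Ekl (k l i j : 'I_NN) : R[i] := cexp2pi (freq R k * xc R i + freq R l * xc R j).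

Definition Dgen (cc : 'I_NN -> 'I_NN -> R[i]) (f : gf) : gf := fun i j =>
  complex.Re (\sum_(k < NN) \sum_(l < NN) (cc k l * fhat f k l * Ekl k l i j)).

Lemma Re_add (x y : R[i]) : complex.Re (x + y) = complex.Re x + complex.Re y.
Proof. by case: x; case: y. Qed.
Lemma Re_opp (x : R[i]) : complex.Re (- x) = - complex.Re x.
Proof. by case: x. Qed.
Lemma Re_sum n (F : 'I_n -> R[i]) : complex.Re (\sum_(i < n) F i) = \sum_(i < n) complex.Re (F i).
Proof. by apply: (big_morph _ Re_add). Qed.
Lemma Re_mulr (z : R[i]) (r : R) : complex.Re z * r = complex.Re (z * r%:C).
Proof. by case: z => a b /=; ring. Qed.
Lemma Re_mull (z : R[i]) (r : R) : r * complex.Re z = complex.Re (r%:C * z).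
Proof. by case: z => a b /=; ring. Qed.
Lemma conj_real (r : R) : conjc (r%:C) = r%:C.
Proof. by rewrite /= oppr0. Qed.
Lemma conj_sum n (F : 'I_n -> R[i]) : conjc (\sum_(i < n) F i) = \sum_(i < n) conjc (F i).
Proof. exact: rmorph_sum. Qed.
Lemma conj_mul (x y : R[i]) : conjc (x * y) = conjc x * conjc y.
Proof. exact: rmorphM. Qed.
Lemma cexpN (t : R) : conjc (cexp2pi (- t)) = cexp2pi t.
Proof. by rewrite /cexp2pi /= mulrN cosN sinN opprK. Qed.

Lemma fhat_conj (g : gf) k l :
  conjc (fhat g k l) = ((hh R K) ^+ 2)%:C * \sum_(i < NN) \sum_(j < NN) ((g i j)%:C * Ekl k l i j).
Proof.
rewrite /fhat conj_mul conj_real conj_sum; congr (_ * _).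
apply: eq_bigr => i _; rewrite conj_sum; apply: eq_bigr => j _.
by rewrite conj_mul conj_real cexpN.
Qed.

Lemma swap4 n (F : 'I_n -> 'I_n -> 'I_n -> 'I_n -> R[i]) :
  \sum_(i < n) \sum_(j < n) \sum_(k < n) \sum_(l < n) F i j k l =
  \sum_(k < n) \sum_(l < n) \sum_(i < n) \sum_(j < n) F i j k l.
Proof.
under eq_bigr => i _ do rewrite exchange_big.
under eq_bigr => i _ do under eq_bigr => k _ do rewrite exchange_big.
rewrite exchange_big; apply: eq_bigr => k _.
by rewrite exchange_big.
Qed.

Lemma distr4 n (a : R[i]) (X : 'I_n -> 'I_n -> 'I_n -> 'I_n -> R[i]) (y : 'I_n -> 'I_n -> R[i]) :
  a * \sum_(i < n) \sum_(j < n) ((\sum_(k < n) \sum_(l < n) X i j k l) * y i j) =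
  \sum_(i < n) \sum_(j < n) \sum_(k < n) \sum_(l < n) a * (X i j k l * y i j).
Proof.
rewrite mulr_sumr; apply: eq_bigr => i _.
rewrite mulr_sumr; apply: eq_bigr => j _.
rewrite mulr_suml mulr_sumr; apply: eq_bigr => k _.
rewrite mulr_suml mulr_sumr; apply: eq_bigr => l _.
done.
Qed.

Lemma ip_Dgen cc f g :
  ip (Dgen cc f) g = complex.Re (\sum_(k < NN) \sum_(l < NN) (cc k l * fhat f k l * conjc (fhat g k l))).
Proof.
rewrite /ip /Dgen.
under eq_bigr => i _ do under eq_bigr => j _ do rewrite Re_mulr.
under eq_bigr => i _ do rewrite -Re_sum.
rewrite -Re_sum Re_mull; congr (complex.Re _).
under [RHS]eq_bigr => k _ do under eq_bigr => l _ do rewrite fhat_conj.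
rewrite distr4 swap4; apply: eq_bigr => k _; apply: eq_bigr => l _.
rewrite mulr_sumr mulr_sumr; apply: eq_bigr => i _.
rewrite mulr_sumr mulr_sumr; apply: eq_bigr => j _.
ring.
Qed.

Lemma ip_sym (f g : gf) : ip f g = ip g f.
Proof.
rewrite /ip; congr (_ * _); apply: eq_bigr => i _; apply: eq_bigr => j _.
by rewrite mulrC.
Qed.

Lemma Re_anti (c a b : R[i]) : complex.Re c = 0 ->
  complex.Re (c * a * conjc b) = - complex.Re (c * b * conjc a).
Proof.
case: c => c1 c2; case: a => a1 a2; case: b => b1 b2 /= ->. ring.
Qed.

Lemma Dgen_anti cc (hcc : forall k l, complex.Re (cc k l) = 0) (f g : gf) :
  ip (Dgen cc f) g = - ip f (Dgen cc g).
Proof.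
rewrite [ip f _]ip_sym !ip_Dgen !Re_sum -sumrN; apply: eq_bigr => k _.
rewrite !Re_sum -sumrN; apply: eq_bigr => l _.
exact: Re_anti.
Qed.

Lemma realC_sub (x y : R) : (x - y)%:C = x%:C - y%:C :> R[i].
Proof. exact: rmorphB. Qed.

Lemma fhat_sub (f g : gf) k l : fhat (gsub f g) k l = fhat f k l - fhat g k l.
Proof.
rewrite /fhat -mulrBr -sumrB; congr (_ * _); apply: eq_bigr => i _.
rewrite -sumrB; apply: eq_bigr => j _.
by rewrite /gsub realC_sub mulrBl.
Qed.

Lemma Re_sub (x y : R[i]) : complex.Re (x - y) = complex.Re x - complex.Re y.
Proof. by rewrite Re_add Re_opp. Qed.

Lemma Dgen_sub cc (f g : gf) : Dgen cc (gsub f g) = fun i j => Dgen cc f i j - Dgen cc g i j.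
Proof.
apply/funext => i; apply/funext => j.
rewrite /Dgen -Re_sub -sumrB; congr (complex.Re _); apply: eq_bigr => k _.
rewrite -sumrB; apply: eq_bigr => l _.
by rewrite fhat_sub mulrBr mulrBl.
Qed.

Definition ccx : 'I_NN -> 'I_NN -> R[i] := fun k l => 0 +i* (2 * pi * freq R k).
Definition ccy : 'I_NN -> 'I_NN -> R[i] := fun k l => 0 +i* (2 * pi * freq R l).
Lemma DNxE (f : gf) : DNx f = Dgen ccx f. Proof. by []. Qed.
Lemma DNyE (f : gf) : DNy f = Dgen ccy f. Proof. by []. Qed.

Lemma anti_x (f g : gf) : ip (DNx f) g = - ip f (DNx g).
Proof. by rewrite !DNxE; apply: Dgen_anti. Qed.
Lemma anti_y (f g : gf) : ip (DNy f) g = - ip f (DNy g).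
Proof. by rewrite !DNyE; apply: Dgen_anti. Qed.
Lemma sub_x (f g : gf) : DNx (gsub f g) = gsub (DNx f) (DNx g).
Proof. by rewrite !DNxE Dgen_sub. Qed.
Lemma sub_y (f g : gf) : DNy (gsub f g) = gsub (DNy f) (DNy g).
Proof. by rewrite !DNyE Dgen_sub. Qed.

Lemma ip_addl (F G g : gf) : ip (gadd F G) g = ip F g + ip G g.
Proof.
rewrite /ip -mulrDr -big_split; congr (_ * _); apply: eq_bigr => i _.
rewrite -big_split; apply: eq_bigr => j _ /=.
by rewrite /gadd mulrDl.
Qed.

Lemma ip_comb (a b : R) (F G g : gf) :
  ip (fun i j => a * F i j - b * G i j) g = a * ip F g - b * ip G g.
Proof.
rewrite /ip mulrCA [b * (_ * _)]mulrCA -mulrBr; congr (_ * _).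
rewrite !mulr_sumr -sumrB; apply: eq_bigr => i _.
rewrite !mulr_sumr -sumrB; apply: eq_bigr => j _.
ring.
Qed.

Lemma ip_scal (a : R) (F g : gf) :
  ip (fun i j => a * F i j) g = a * ip F g.
Proof.
rewrite /ip mulrCA; congr (_ * _).
rewrite !mulr_sumr; apply: eq_bigr => i _.
rewrite !mulr_sumr; apply: eq_bigr => j _.
by rewrite mulrA.
Qed.

Lemma ip_Lap (f g : gf) : ip (LapN f) g = - (ip (DNx f) (DNx g) + ip (DNy f) (DNy g)).
Proof.
have -> : LapN f = gadd (DNx (DNx f)) (DNy (DNy f)) by [].
by rewrite ip_addl !anti_x !anti_y opprD.
Qed.

Lemma ip_Lap_sym (f g : gf) : ip (LapN f) g = ip f (LapN g).
Proof.
by rewrite ip_Lap [ip f _]ip_sym ip_Lap [ip (DNx g) _]ip_sym [ip (DNy g) _]ip_sym.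
Qed.

Lemma Lap_sub (f g : gf) : LapN (gsub f g) = gsub (LapN f) (LapN g).
Proof.
apply/funext => i; apply/funext => j.
rewrite /LapN !sub_x !sub_y /gsub; ring.
Qed.

Lemma ip_LN eps kappa (v g : gf) :
  ip (LN eps kappa v) g = eps ^+ 2 * ip (LapN (LapN v)) g - kappa * ip (LapN v) g.
Proof. exact: ip_comb. Qed.

Lemma ip_fN kappa (w g : gf) :
  ip (fN kappa w) g =
    - ip (fun a b => DNx w a b / (1 + gradsq w a b)) (DNx g)
    - ip (fun a b => DNy w a b / (1 + gradsq w a b)) (DNy g)
    + kappa * ip (LapN w) g.
Proof.
have -> : fN kappa w = gadd (gadd (DNx (fun a b => DNx w a b / (1 + gradsq w a b)))
   (DNy (fun a b => DNy w a b / (1 + gradsq w a b)))) (fun i j => kappa * LapN w i j).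
  by [].
rewrite !ip_addl ip_scal anti_x anti_y.
congr (_ + _ * _); exact: ip_addl.
Qed.

Definition S (F : gf) : R := hh R K ^+ 2 * \sum_(i < NN) \sum_(j < NN) F i j.
Lemma ipS (F G : gf) : ip F G = S (fun i j => F i j * G i j). Proof. by []. Qed.
Lemma ENS eps (p : gf) : EN eps p = S (fun i j => - (1/2) * ln (1 + gradsq p i j)) + eps ^+ 2 / 2 * S (fun i j => LapN p i j * LapN p i j).
Proof. by []. Qed.
Lemma S_add (F G : gf) : S F + S G = S (fun i j => F i j + G i j).
Proof.
rewrite /S -mulrDr -big_split; congr (_ * _); apply: eq_bigr => i _.
by rewrite -big_split.
Qed.
Lemma S_scal c (F : gf) : c * S F = S (fun i j => c * F i j).
Proof.
rewrite /S mulrCA; congr (_ * _); rewrite mulr_sumr; apply: eq_bigr => i _.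
by rewrite mulr_sumr.
Qed.
Lemma S_opp (F : gf) : - S F = S (fun i j => - F i j).
Proof. by rewrite -mulN1r S_scal; congr S; apply/funext => i; apply/funext => j; rewrite mulN1r. Qed.
Lemma S_le (F G : gf) : (forall i j, F i j <= G i j) -> S F <= S G.
Proof.
move=> h; rewrite /S; apply: ler_wpM2l; first by rewrite exprn_ge0 // invr_ge0.
by apply: ler_sum => i _; apply: ler_sum => j _.
Qed.

End F.

Theorem lemma2p6 (R : realType) (K : nat) (eps kappa : R)
  (heps : 0 < eps) (hkappa : 1 / 4 <= kappa)
  (v w : gridfun R K) (hmean : gmean v = gmean w) :
  EN eps v - EN eps w <=
    ip (gadd (LN eps kappa v) (fN kappa w)) (gsub v w)
    - eps ^+ 2 / 2 * nrm2sq (LapN (gsub v w))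
    - (kappa - 1 / 8) * gradnrm2sq (gsub v w).
Proof.
rewrite (ip_addl _ _ (LN eps kappa v)) ip_LN ip_fN (ip_Lap_sym _ _ (LapN v)).
rewrite (ip_Lap _ _ v (gsub v w)) (ip_Lap _ _ w (gsub v w)).
rewrite !sub_x !sub_y !Lap_sub.
rewrite /gradnrm2sq /nrm2sq !ENS !ipS.
rewrite !(S_scal, S_opp, S_add).
apply: S_le => i j /=.
rewrite !sub_x !sub_y /gsub /gradsq.
have := @keyP R (DNx v i j) (DNy v i j) (DNx w i j) (DNy w i j).
set a := DNx v i j; set b := DNy v i j; set c := DNx w i j; set d := DNy w i j.
set L1 := LapN v i j; set L2 := LapN w i j.
set s := 1 + (c ^+ 2 + d ^+ 2).
set l1 := ln (1 + (a ^+ 2 + b ^+ 2)); set l2 := ln s.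
have -> : c / s * (a - c) = c * (a - c) / s by ring.
have -> : d / s * (b - d) = d * (b - d) / s by ring.
set q1 := c * (a - c) / s; set q2 := d * (b - d) / s.
have -> : (c * (a - c) + d * (b - d)) / s = q1 + q2 by rewrite /q1 /q2; ring.
move=> H.
nra.
Qed.
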